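(* For every program $\Pi$ with nested expressions, a set $X$ of atoms is a stable model of $\Pi$ (as a theory, in the sense defined below) if and only if $X$ is a stable model of $\Pi$ in the sense of Lifschitz, Tang and Turner (1999), i.e. iff $X$ is a minimal (with respect to set inclusion) set of atoms satisfying $\Pi^{\underline X}$.
   Context: Fix a set of propositional atoms. Formulas are built from atoms and $\bot$ using the binary connectives $\wedge,\vee,\to$; $\top$ abbreviates $\bot\to\bot$, $\neg F$ abbreviates $F\to\bot$. A theory is a set of formulas; $X\models F$ denotes classical satisfaction by the set of atoms $X$. The reduct $F^X$: $\bot^X=\bot$; for an atom $a$, $a^X=a$ if $a\in X$ and $\bot$ otherwise; for $\otimes\in\{\wedge,\vee,\to\}$, $(F\otimes G)^X=F^X\otimes G^X$ if $X\models F\otimes G$, and $\bot$ otherwise; $\Gamma^X=\{F^X:F\in\Gamma\}$. $X$ is a stable model of a theory $\Gamma$ if $X\models\Gamma^X$ and no proper subset of $X$ satisfies $\Gamma^X$. A nested expression is a formula containing no implications other than those of the form $\neg F$ or $\top$. A program with nested expressions is a set of rules $F\leftarrow G$ (identified with $G\to F$) where $F,G$ are nested expressions. The reduct $\Pi^{\underline X}$ is obtained from $\Pi$ by replacing, in each rule, each maximal subformula of the form $\neg F$ by $\top$ if $X\models\neg F$ and by $\bot$ otherwise. *)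

(* Defs.v *)
From Stdlib Require Import Bool.

Set Implicit Arguments.

Inductive form (A : Type) : Type :=
| Atom : A -> form A
| Bot : form A
| And : form A -> form A -> form A
| Or : form A -> form A -> form A
| Imp : form A -> form A -> form A.

Arguments Bot {A}.

Definition Top {A : Type} : form A := Imp Bot Bot.
Definition Neg {A : Type} (F : form A) : form A := Imp F Bot.

(* A set of atoms is given by its characteristic function (classically every
   set of atoms has one). *)
Definition atomset (A : Type) := A -> bool.

Fixpoint sat {A : Type} (X : atomset A) (F : form A) : bool :=
  match F with
  | Atom a => X a
  | Bot => false
  | And F G => sat X F && sat X G
  | Or F G => sat X F || sat X G
  | Imp F G => implb (sat X F) (sat X G)
  end.

Definition theory (A : Type) := form A -> Prop.

Definition sat_theory {A : Type} (X : atomset A) (T : theory A) : Prop :=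
  forall F, T F -> sat X F = true.

Fixpoint reduct {A : Type} (X : atomset A) (F : form A) : form A :=
  match F with
  | Atom a => if X a then Atom a else Bot
  | Bot => Bot
  | And G H => if sat X (And G H) then And (reduct X G) (reduct X H) else Bot
  | Or G H => if sat X (Or G H) then Or (reduct X G) (reduct X H) else Bot
  | Imp G H => if sat X (Imp G H) then Imp (reduct X G) (reduct X H) else Bot
  end.

Definition reduct_theory {A : Type} (X : atomset A) (T : theory A) : theory A :=
  fun H => exists F, T F /\ H = reduct X F.

Definition proper_subset {A : Type} (Y X : atomset A) : Prop :=
  (forall a, Y a = true -> X a = true) /\ (exists a, X a = true /\ Y a = false).

Definition stable_model_theory {A : Type} (T : theory A) (X : atomset A) : Prop :=
  sat_theory X (reduct_theory X T) /\
  forall Y, proper_subset Y X -> ~ sat_theory Y (reduct_theory X T).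

(* Nested expressions: no implications other than those of the form
   neg F (i.e. F -> bot, which includes top = bot -> bot). *)
Fixpoint nested {A : Type} (F : form A) : Prop :=
  match F with
  | Atom _ => True
  | Bot => True
  | And G H => nested G /\ nested H
  | Or G H => nested G /\ nested H
  | Imp G H => nested G /\ H = Bot
  end.

(* A rule F <- G is represented by the pair (F, G) = (head, body). *)
Definition rule (A : Type) := (form A * form A)%type.

Definition program (A : Type) := rule A -> Prop.

Definition nested_program {A : Type} (P : program A) : Prop :=
  forall r, P r -> nested (fst r) /\ nested (snd r).

Definition rule_formula {A : Type} (r : rule A) : form A := Imp (snd r) (fst r).

Definition program_theory {A : Type} (P : program A) : theory A :=
  fun H => exists r, P r /\ H = rule_formula r.

(* LTT reduct of a nested expression: replace each maximal subformula of the
   form neg F by top if X |= neg F and by bot otherwise. *)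
Fixpoint ltt_reduct {A : Type} (X : atomset A) (F : form A) : form A :=
  match F with
  | Atom a => Atom a
  | Bot => Bot
  | And G H => And (ltt_reduct X G) (ltt_reduct X H)
  | Or G H => Or (ltt_reduct X G) (ltt_reduct X H)
  | Imp G Bot => if sat X (Imp G Bot) then Top else Bot
  | Imp G H => Imp (ltt_reduct X G) (ltt_reduct X H)
  end.

Definition ltt_reduct_program {A : Type} (X : atomset A) (P : program A) : program A :=
  fun r' => exists r, P r /\ r' = (ltt_reduct X (fst r), ltt_reduct X (snd r)).

Definition sat_program {A : Type} (Y : atomset A) (P : program A) : Prop :=
  forall r, P r -> sat Y (rule_formula r) = true.

Definition stable_model_LTT {A : Type} (P : program A) (X : atomset A) : Prop :=
  sat_program X (ltt_reduct_program X P) /\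
  forall Y, proper_subset Y X -> ~ sat_program Y (ltt_reduct_program X P).

(* Main.v *)
Require Import Defs.
From Stdlib Require Import Bool.

Definition subs {A : Type} (Y Z : atomset A) := forall a, Y a = true -> Z a = true.

Lemma ltt_X {A} (X : atomset A) F : nested F -> sat X (ltt_reduct X F) = sat X F.
Proof.
  induction F; simpl; intros Hn; auto.
  - destruct Hn; rewrite IHF1, IHF2; auto.
  - destruct Hn; rewrite IHF1, IHF2; auto.
  - destruct Hn as [_ ->]. simpl. destruct (sat X F1); reflexivity.
Qed.

Lemma mono {A} (X Y Z : atomset A) F : nested F -> subs Y Z ->
  sat Y (ltt_reduct X F) = true -> sat Z (ltt_reduct X F) = true.
Proof.
  intros Hn Hs; induction F; simpl in *; auto.
  - destruct Hn. intros K; apply andb_true_iff in K as [K1 K2].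
    rewrite IHF1, IHF2; auto.
  - destruct Hn. intros K; apply orb_true_iff in K as [K1|K2].
    rewrite IHF1; auto. rewrite IHF2, orb_true_r; auto.
  - destruct Hn as [_ ->]. simpl. destruct (implb (sat X F1) false); simpl; auto.
Qed.

Lemma key {A} (X Y : atomset A) F : nested F -> subs Y X ->
  sat Y (reduct X F) = sat X F && sat Y (ltt_reduct X F).
Proof.
  intros Hn Hs; induction F; simpl in *.
  - destruct (X a) eqn:E; simpl; auto.
    all: try (destruct (Y a); discriminate).
  - reflexivity.
  - destruct Hn as [H1 H2].
    destruct (sat X F1 && sat X F2) eqn:E; simpl; auto.
    rewrite IHF1, IHF2 by auto. apply andb_true_iff in E as [-> ->]. reflexivity.
  - destruct Hn as [H1 H2].
    pose proof (mono X Y X F1 H1 Hs) as M1. pose proof (mono X Y X F2 H2 Hs) as M2.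
    rewrite ltt_X in M1, M2 by auto.
    destruct (sat X F1), (sat X F2); simpl; rewrite ?IHF1, ?IHF2 by auto;
    destruct (sat Y (ltt_reduct X F1)), (sat Y (ltt_reduct X F2)); simpl in *; auto;
    try (specialize (M1 eq_refl); discriminate);
    try (specialize (M2 eq_refl); discriminate).
  - destruct Hn as [H1 ->]. simpl.
    destruct (sat X F1) eqn:E; simpl; auto; rewrite IHF1 by auto; rewrite ?E; reflexivity.
Qed.

Lemma rule_X {A} (X : atomset A) B H : nested B -> nested H ->
  sat X (reduct X (Imp B H)) = sat X (Imp B H) /\
  sat X (Imp (ltt_reduct X B) (ltt_reduct X H)) = sat X (Imp B H).
Proof.
  intros HB HH. assert (Hs : subs X X) by (intros a; auto).
  split.
  - simpl. destruct (implb (sat X B) (sat X H)) eqn:E; simpl; auto.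
    rewrite !key by auto. rewrite !ltt_X by auto.
    destruct (sat X B), (sat X H); simpl in *; auto.
  - simpl. rewrite !ltt_X by auto. reflexivity.
Qed.

Lemma rule_Y {A} (X Y : atomset A) B H : nested B -> nested H -> subs Y X ->
  sat X (Imp B H) = true ->
  sat Y (reduct X (Imp B H)) = sat Y (Imp (ltt_reduct X B) (ltt_reduct X H)).
Proof.
  intros HB HH Hs E. simpl in *. rewrite E. simpl.
  rewrite !key by auto.
  pose proof (mono X Y X B HB Hs) as M. rewrite ltt_X in M by auto.
  destruct (sat Y (ltt_reduct X B)), (sat X B), (sat X H),
    (sat Y (ltt_reduct X H)); simpl in *; auto;
  try (specialize (M eq_refl); discriminate); discriminate.
Qed.

Theorem proposition2 (A : Type) (P : program A) (X : atomset A) :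
  nested_program P ->
  (stable_model_theory (program_theory P) X <-> stable_model_LTT P X).
Proof.
  intros HP.
  assert (EX : sat_theory X (reduct_theory X (program_theory P)) <->
               sat_program X (ltt_reduct_program X P)).
  { split.
    - intros H r [r0 [Hr ->]]. destruct (HP r0 Hr) as [N1 N2].
      unfold rule_formula; cbn [fst snd].
      destruct (rule_X X (snd r0) (fst r0) N2 N1) as [E1 E2].
      rewrite E2, <- E1. apply H. exists (rule_formula r0). split; auto.
      exists r0; auto.
    - intros H F [F0 [[r0 [Hr ->]] ->]]. destruct (HP r0 Hr) as [N1 N2].
      unfold rule_formula.
      destruct (rule_X X (snd r0) (fst r0) N2 N1) as [E1 E2].
      rewrite E1, <- E2. apply (H (ltt_reduct X (fst r0), ltt_reduct X (snd r0))).
      exists r0; auto. }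
  assert (EY : sat_program X (ltt_reduct_program X P) -> forall Y, subs Y X ->
     (sat_theory Y (reduct_theory X (program_theory P)) <->
      sat_program Y (ltt_reduct_program X P))).
  { intros HX Y Hs.
    assert (HXr : forall r0, P r0 -> sat X (Imp (snd r0) (fst r0)) = true).
    { intros r0 Hr. destruct (HP r0 Hr) as [N1 N2].
      destruct (rule_X X (snd r0) (fst r0) N2 N1) as [E1 E2].
      rewrite <- E2. apply (HX (ltt_reduct X (fst r0), ltt_reduct X (snd r0))).
      exists r0; auto. }
    split.
    - intros H r [r0 [Hr ->]]. destruct (HP r0 Hr) as [N1 N2].
      unfold rule_formula; cbn [fst snd].
      rewrite <- rule_Y by auto.
      apply H. exists (rule_formula r0). split; auto. exists r0; auto.
    - intros H F [F0 [[r0 [Hr ->]] ->]]. destruct (HP r0 Hr) as [N1 N2].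
      unfold rule_formula. rewrite rule_Y by auto.
      apply (H (ltt_reduct X (fst r0), ltt_reduct X (snd r0))).
      exists r0; auto. }
  unfold stable_model_theory, stable_model_LTT. split.
  - intros [H1 H2]. assert (HX := proj1 EX H1). split; auto.
    intros Y HY HYs. apply (H2 Y HY). apply (EY HX Y (proj1 HY)); auto.
  - intros [H1 H2]. split. apply EX; auto.
    intros Y HY HYs. apply (H2 Y HY). apply (EY H1 Y (proj1 HY)); auto.
Qed.
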